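(* Let $\mu$ be a partition and write $\mathrm{Res}_\mu(t)=\sum_{j\in\mathbb{Z}}b_jt^j$. Let $k\in\mathbb{Z}$. (a) There is a removable cell of content $k$ if and only if: $b_{k-1}=b_k$ and $b_{k+1}=b_k-1$ (when $k>0$); or $b_{k+1}=b_k$ and $b_{k-1}=b_k-1$ (when $k<0$); or $b_{-1}=b_1$ and $b_0=b_1+1$ (when $k=0$). (b) There is an addable cell of content $k$ if and only if: $b_{k+1}=b_k$ and $b_{k-1}=b_k+1$ (when $k>0$); or $b_{k-1}=b_k$ and $b_{k+1}=b_k+1$ (when $k<0$); or $b_{-1}=b_0=b_1$ (when $k=0$). (c) No cell of content $k$ is addable or removable if and only if: $b_{k+1}=b_k=b_{k-1}$ or $b_{k+1}=b_k-1=b_{k-1}-2$ (when $k>0$); or $b_{k+1}=b_k=b_{k-1}$ or $b_{k+1}=b_k+1=b_{k-1}+2$ (when $k<0$); or $b_{-1}=b_0=b_1+1$ or $b_1=b_0=b_{-1}+1$ (when $k=0$).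
   Context: $\mathrm{Res}_\mu(t)=\sum_{\square\in\mu}t^{c(\square)}$, where $c(i,j)=j-i$ is the content of a cell $(i,j)$ of the Young diagram $\{(i,j):1\le j\le\mu_i\}$. A cell of $\mu$ is removable if deleting it leaves a Young diagram. A cell not in $\mu$ is addable if adding it gives a Young diagram. *)

(* Defs.v *)
From mathcomp Require Import all_boot all_order all_algebra.
Set Implicit Arguments. Unset Strict Implicit. Unset Printing Implicit Defensive.
Import GRing.Theory Num.Theory.

Definition is_partition (mu : seq nat) : bool :=
  sorted geq mu && all (fun m => 0 < m) mu.

Definition cells (mu : seq nat) : seq (nat * nat) :=
  [seq (i.+1, j.+1) | i <- iota 0 (size mu), j <- iota 0 (nth 0 mu i)].

Definition content (c : nat * nat) : int := (c.2%:Z - c.1%:Z)%R.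

Definition is_young (D : seq (nat * nat)) : Prop :=
  exists la, is_partition la /\ cells la =i D.

Definition removable (mu : seq nat) (c : nat * nat) : Prop :=
  c \in cells mu /\ is_young [seq x <- cells mu | x != c].

Definition addable (mu : seq nat) (c : nat * nat) : Prop :=
  c \notin cells mu /\ is_young (c :: cells mu).

(* Coefficient b_j of t^j in Res_mu(t) = sum over cells of t^{content}. *)
Definition res_coef (mu : seq nat) (j : int) : int :=
  (count (fun c => content c == j) (cells mu))%:Z.

(* Main.v *)
Require Import Defs.
From Stdlib Require Import Classical.
From mathcomp Require Import all_boot all_order all_algebra zify.
Import GRing.Theory Num.Theory.


Lemma part_mono mu i j : is_partition mu -> (i <= j)%N -> (nth 0 mu j <= nth 0 mu i)%N.
Proof.
case/andP=> hs _ hij.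
have [hj|hj] := ltnP j (size mu); last by rewrite nth_default.
have hi : (i < size mu)%N by apply: leq_ltn_trans hj.
have := @sorted_leq_nth _ geq _ _ 0 mu hs i j hi hj hij. apply.
- by move=> a b c /= h1 h2; apply: leq_trans h2 h1.
- by move=> a /=.
Qed.

Lemma mem_cells mu a b :
  ((a, b) \in cells mu) = [&& (0 < a)%N, (0 < b)%N & (b <= nth 0 mu a.-1)%N].
Proof.
apply/allpairsPdep/idP.
- case=> i [j [hi hj [-> ->]]] /=.
  by move: hj; rewrite mem_iota add0n.
- case/and3P; case: a => // a; case: b => // b _ _ /= hb.
  exists a, b; split => //.
  + rewrite mem_iota add0n /=. case: (ltnP a (size mu)) => // h.
    by move: hb; rewrite nth_default.
  + by rewrite mem_iota add0n.
Qed.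

Lemma exists_part (f : nat -> nat) N :
  (forall i j, (i <= j)%N -> (f j <= f i)%N) -> (forall i, (N <= i)%N -> f i = 0%N) ->
  exists la, is_partition la /\ forall i, nth 0 la i = f i.
Proof.
elim: N f => [|N IH] f hm hz.
  by exists [::]; split => // i; rewrite nth_nil hz.
have [la [hla hn]] := IH (fun i => f i.+1) (fun i j h => hm i.+1 j.+1 h) (fun i h => hz i.+1 h).
case: (posnP (f 0%N)) => hf0.
  exists [::]; split => // i; rewrite nth_nil; apply/esym/eqP.
  by rewrite -leqn0 -hf0 hm.
exists (f 0%N :: la); split; last by case.
move: hla; rewrite /is_partition /= hf0 => /andP[hs ->]; rewrite andbT.
case: la hn hs => [|y la] hn hs //=. move: hs; rewrite /= => ->; rewrite andbT.
have := hn 0%N; rewrite /= => ->. by rewrite andbT hm.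
Qed.


Lemma rem_char mu k : is_partition mu ->
  (exists c, content c = k /\ removable mu c) <->
  exists r, (nth 0 mu r.+1 < nth 0 mu r)%N /\ ((nth 0%N mu r)%:Z - 1 - r%:Z)%R = k.
Proof.
move=> hmu; split.
- case=> [[a b]] [hk [hc [la [hla hD]]]].
  have hD' : forall p, (p \in cells la) = (p \in cells mu) && (p != (a, b)).
    by move=> p; rewrite hD mem_filter andbC.
  move: hc; rewrite mem_cells; clear hD; case: a hk hD' => // r; case: b => // s hk hD' /= hs.
  have hcl : (r.+1, s.+1) \notin cells la by rewrite hD' eqxx andbF.
  have hl := fun i j => @part_mono la i j hla.
  exists r.
  have e1 : s.+1 = nth 0 mu r.
    case: (ltnP s.+1 (nth 0 mu r)) => h; last lia.
    have := hD' (r.+1, s.+2); rewrite !mem_cells /= h.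
    have -> : (r.+1, s.+2) != (r.+1, s.+1) by rewrite xpair_eqE /= eqxx /=; lia.
    move=> h2; move: hcl; rewrite mem_cells /= ; move: h2; rewrite andbT => h2; lia.
  split; last by rewrite -hk /content /= -e1; lia.
  rewrite -e1 ltnS; case: (ltnP s (nth 0 mu r.+1)) => h //; exfalso.
  have := hD' (r.+2, s.+1); rewrite !mem_cells /= h.
  have -> : (r.+2, s.+1) != (r.+1, s.+1) by rewrite xpair_eqE /=; lia.
  move=> h2; move: hcl; rewrite mem_cells /=.
  have := hl r r.+1 (leqnSn r). move: h2; lia.
- case=> r [hr hk].
  have hm := fun i j => @part_mono mu i j hmu.
  have hrs : (r < size mu)%N.
    by case: (ltnP r (size mu)) => // h; move: hr; rewrite (nth_default 0 h).
  exists (r.+1, nth 0 mu r); split; first by rewrite -hk /content /=; lia.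
  split; first by rewrite mem_cells /=; lia.
  pose f := fun i => if i == r then (nth 0 mu r).-1 else nth 0 mu i.
  have h1 : forall i j, i <= j -> f j <= f i.
    move=> i j hij; rewrite /f /=.
    case: (eqVneq i r) => [e|hir]; case: (eqVneq j r) => [hj|hjr]; rewrite /=; try subst i; try subst j.
    * done.
    * have := hm r.+1 j; have := hm r j; lia.
    * have := hm i r hij; lia.
    * exact: hm.
  have h2 : forall i, size mu <= i -> f i = 0.
    rewrite /f => i hi; have -> : (i == r) = false by apply/eqP => e; move: hi; rewrite e; lia.
    by rewrite nth_default.
  have [la [hla hn]] := @exists_part f (size mu) h1 h2.
  exists la; split => // -[a b].
  rewrite mem_filter !mem_cells hn xpair_eqE /=.
  case: a => [|a] //=; rewrite /f eqSS.
  case: (eqVneq a r) => [e|har] /=.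
  + subst a; case: b => [|b] //=; apply/idP/idP; lia.
  + by [].
Qed.

Lemma add_char mu k : is_partition mu ->
  (exists c, content c = k /\ addable mu c) <->
  exists r, (r = 0 \/ nth 0 mu r < nth 0 mu r.-1) /\ ((nth 0%N mu r)%:Z - r%:Z)%R = k.
Proof.
move=> hmu; have hm := fun i j => @part_mono mu i j hmu; split.
- case=> [[a b]] [hk [hc [la [hla hD]]]].
  have hD' : forall p, (p \in cells la) = (p == (a, b)) || (p \in cells mu).
    by move=> p; rewrite hD in_cons.
  have hl := fun i j => @part_mono la i j hla.
  have := hD' (a, b); rewrite eqxx /= mem_cells; clear hD.
  case: a hk hD' hc => // r; case: b => // s hk hD' hc /= hs.
  move: hc; rewrite mem_cells /= -leqNgt => hc.
  have e1 : s = nth 0 mu r.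
    case: (ltnP (nth 0 mu r) s) => h; last lia.
    case: s h hk hD' hs hc => // s h hk hD' hs hc.
    have := hD' (r.+1, s.+1); rewrite !mem_cells /=.
    have -> : ((r.+1, s.+1) == (r.+1, s.+2)) = false by rewrite xpair_eqE /=; lia.
    rewrite /=; move: hs; lia.
  exists r; split; last by rewrite -hk /content /= -e1; lia.
  case: r hk hD' hs hc e1 => [|r] hk hD' hs hc e1; [by left | right] => /=.
  case: (ltnP (nth 0 mu r.+1) (nth 0 mu r)) => // h; exfalso.
  have := hD' (r.+1, s.+1); rewrite !mem_cells /=.
  have -> : ((r.+1, s.+1) == (r.+2, s.+1)) = false by rewrite xpair_eqE /=; lia.
  have := hl r r.+1 (leqnSn r); rewrite /=; move: hs; lia.
- case=> r [hr hk].
  exists (r.+1, (nth 0 mu r).+1); split; first by rewrite -hk /content /=; lia.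
  split; first by rewrite mem_cells /=; lia.
  pose f := fun i => if i == r then (nth 0 mu r).+1 else nth 0 mu i.
  have h1 : forall i j, i <= j -> f j <= f i.
    move=> i j hij; rewrite /f /=.
    case: (eqVneq i r) => [e|hir]; case: (eqVneq j r) => [hj|hjr]; rewrite /=; try subst i; try subst j.
    * done.
    * have := hm r j hij; lia.
    * have := hm i r.-1; case: hr => hr; move: hir hij; lia.
    * exact: hm.
  have h2 : forall i, size mu + r.+1 <= i -> f i = 0.
    rewrite /f => i hi; have -> : (i == r) = false by apply/eqP => e; move: hi; rewrite e; lia.
    by rewrite nth_default //; lia.
  have [la [hla hn]] := @exists_part f (size mu + r.+1) h1 h2.
  exists la; split => // -[a b].
  rewrite in_cons !mem_cells hn xpair_eqE /=.
  case: a => [|a] //=; rewrite /f eqSS.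
  case: (eqVneq a r) => [e|har] /=.
  + subst a; case: b => [|b] //=; apply/idP/idP; lia.
  + by [].
Qed.

Lemma count_iota_uniq (P : pred nat) r0 L :
  (forall r, P r -> r = r0) -> count P (iota 0 L) = ((r0 < L) && P r0).
Proof.
move=> H; elim: L => [|L IH] //.
rewrite -addn1 iotaD count_cat IH /= add0n addn0.
case: (boolP (P L)) => hL.
  have e := H _ hL; rewrite -e ltnn /= hL; lia.
have hPL := negbTE hL.
case: (boolP (r0 == L)) => [/eqP e|ne].
  by move: hPL; rewrite -e => hPL; rewrite hPL !andbF.
move: ne; lia.
Qed.

Local Open Scope ring_scope.

Lemma count_lin (P Q R T : pred nat) s :
  (forall x, ((P x)%:Z - (Q x)%:Z = (R x)%:Z - (T x)%:Z)%R) ->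
  ((count P s)%:Z - (count Q s)%:Z = (count R s)%:Z - (count T s)%:Z)%R.
Proof.
move=> H; elim: s => [|x s IH] //=.
have := H x; move: IH; lia.
Qed.

Lemma b_rows mu (j : int) : res_coef mu j =
  (count (fun r : nat => (0 <= r%:Z + j)%R && (r%:Z + j < (nth 0%N mu r)%:Z)%R) (iota 0 (size mu)))%:Z.
Proof.
rewrite /res_coef /cells count_flatten -map_comp -sumn_count; congr (Posz (sumn _)).
apply: eq_map => i /=; rewrite count_map.
rewrite (@count_iota_uniq _ `|(i%:Z + j)%R|%N).
- rewrite /content /=; lia.
- move=> s; rewrite /content /=; lia.
Qed.


Lemma key mu (j : int) : is_partition mu ->
  exists e : bool, (e <-> exists r : nat, (nth 0%N mu r)%:Z - r%:Z = j) /\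
    res_coef mu (j - 1) - res_coef mu j = (nat_of_bool e)%:Z - (nat_of_bool (j <= 0)%R)%:Z.
Proof.
move=> hmu; have hm := fun i k => @part_mono mu i k hmu.
have hz : forall r, (size mu <= r)%N -> nth 0%N mu r = 0%N by move=> r h; rewrite nth_default.
rewrite !b_rows.
rewrite (@count_lin _ _ (fun r : nat => ((nth 0%N mu r)%:Z - r%:Z == j) && (1 <= r%:Z + j))
                        (fun r : nat => (r%:Z + j == 0) && (j < (nth 0%N mu r)%:Z - r%:Z))); last first.
  by move=> x; lia.
have -> : count (fun r : nat => (r%:Z + j == 0) && (j < (nth 0%N mu r)%:Z - r%:Z)) (iota 0 (size mu))
   = (`|j|%N < size mu)%N && ((`|j|%N%:Z + j == 0) && (j < (nth 0%N mu `|j|%N)%:Z - `|j|%N%:Z)).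
  by apply: count_iota_uniq => r; lia.
have hr0 := hz `|j|%N.
have hd := fun r r' => (hm r r').
case: (classic (exists r : nat, (nth 0%N mu r)%:Z - r%:Z = j)) => [[r1 h1]|hn].
- exists true; split; first by split => // _; exists r1.
  rewrite (@count_iota_uniq _ r1); last first.
    move=> r /andP[/eqP hr _].
    case: (ltngtP r r1) => // h.
    + have := hm r r1 (ltnW h); lia.
    + have := hm r1 r (ltnW h); lia.
  have hr1 := hz r1.
  have f1 := hm r1 `|j|%N; have f2 := hm `|j|%N r1.
  move: h1 hr1 hr0 f1 f2; lia.
- exists false; split; first by split => // h; case: hn.
  rewrite (@count_iota_uniq _ 0%N); last first.
    by move=> r /andP[/eqP hr _]; case: hn; exists r.
  have h0 : (nth 0%N mu 0)%:Z - 0%:Z <> j by move=> h; apply: hn; exists 0%N.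
  have hj : (nth 0%N mu `|j|%N)%:Z - `|j|%N%:Z <> j by move=> h; apply: hn; exists `|j|%N.
  move: h0 hj hr0; lia.
Qed.
Local Open Scope ring_scope.

Lemma rem_XY mu k : is_partition mu ->
  (exists c, content c = k /\ removable mu c) <->
  ((exists r : nat, (nth 0%N mu r)%:Z - r%:Z = k + 1) /\
   ~ (exists r : nat, (nth 0%N mu r)%:Z - r%:Z = k)).
Proof.
move=> hmu; have hm := fun i j => @part_mono mu i j hmu.
rewrite rem_char //; split.
- case=> r [h1 h2]; split; first by exists r; lia.
  case=> r' h3. case: (leqP r' r) => h.
  + have := hm r' r h; lia.
  + have := hm r.+1 r' h; lia.
- case=> [[r h1] hn]; exists r; split; last by lia.
  case: (ltnP (nth 0%N mu r.+1) (nth 0%N mu r)) => // h; exfalso.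
  apply: hn; exists r.+1; have := hm r r.+1 (leqnSn r); lia.
Qed.

Lemma add_XY mu k : is_partition mu ->
  (exists c, content c = k /\ addable mu c) <->
  ((exists r : nat, (nth 0%N mu r)%:Z - r%:Z = k) /\
   ~ (exists r : nat, (nth 0%N mu r)%:Z - r%:Z = k + 1)).
Proof.
move=> hmu; have hm := fun i j => @part_mono mu i j hmu.
rewrite add_char //; split.
- case=> r [h1 h2]; split; first by exists r; lia.
  case=> r' h3. case: (leqP r r') => h.
  + have := hm r r' h; lia.
  + case: h1 => h1; first lia.
    have := hm r' r.-1; lia.
- case=> [[r h1] hn]; exists r; split; last by lia.
  case: r h1 => [|r] h1; [by left | right] => /=.
  case: (ltnP (nth 0%N mu r.+1) (nth 0%N mu r)) => // h; exfalso.
  apply: hn; exists r; have := hm r r.+1 (leqnSn r); lia.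
Qed.

Theorem lemma9p10 (mu : seq nat) (k : int) (hmu : is_partition mu) :
  let b := res_coef mu in
  ((exists c, content c = k /\ removable mu c) <->
     (if 0 < k then b (k - 1) = b k /\ b (k + 1) = b k - 1
      else if k < 0 then b (k + 1) = b k /\ b (k - 1) = b k - 1
      else b (-1) = b 1 /\ b 0 = b 1 + 1))
  /\
  ((exists c, content c = k /\ addable mu c) <->
     (if 0 < k then b (k + 1) = b k /\ b (k - 1) = b k + 1
      else if k < 0 then b (k - 1) = b k /\ b (k + 1) = b k + 1
      else b (-1) = b 0 /\ b 0 = b 1))
  /\
  ((~ exists c, content c = k /\ (addable mu c \/ removable mu c)) <->
     (if 0 < k then
        (b (k + 1) = b k /\ b k = b (k - 1)) \/
        (b (k + 1) = b k - 1 /\ b k - 1 = b (k - 1) - 2)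
      else if k < 0 then
        (b (k + 1) = b k /\ b k = b (k - 1)) \/
        (b (k + 1) = b k + 1 /\ b k + 1 = b (k - 1) + 2)
      else
        (b (-1) = b 0 /\ b 0 = b 1 + 1) \/
        (b 1 = b 0 /\ b 0 = b (-1) + 1))).
Proof.
move=> b.
have hor : (exists c, content c = k /\ (addable mu c \/ removable mu c)) <->
  ((exists c, content c = k /\ addable mu c) \/ (exists c, content c = k /\ removable mu c)).
  split; first by case=> c [h [h1|h1]]; [left|right]; exists c.
  by case=> -[c [h h1]]; exists c; split => //; [left|right].
rewrite hor (rem_XY mu k hmu) (add_XY mu k hmu).
have [e1 [he1 hb1]] := key mu k hmu.
have [e2 [he2 hb2]] := key mu (k + 1) hmu.
rewrite addrK in hb2.
rewrite -he1 -he2.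
rewrite /b.
have hz0 : (0 : int) = 1 - 1 by [].
have hm1 : (-1 : int) = 0 - 1 by [].
move: hb1 hb2; clear he1 he2 hor.
case: e1; case: e2; case: ifP => h1; try case: ifP => h2; move=> hb1 hb2.
all: try (have ek : k = 0 by lia); try subst k.
all: rewrite ?add0r ?sub0r in hb1 hb2 *.
all: split; [|split]; split; move=> H; lia.
Qed.
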